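(* Let $C$ be a configuration on the unlabelled complete graph $K_n$ whose distinct stack sizes are $s_1<s_2<\dots<s_N$, with $s_j$ occurring $a_j\ge1$ times. If $C$ is a period configuration of Parallel Diffusion, then $s_{j+1}-s_j\le a_j+a_{j+1}-1$ for every $1\le j\le N-1$.
   Context: Parallel Diffusion on a graph $G$: a configuration assigns an integer stack size $|v|$ to each vertex. One firing step replaces every stack size simultaneously by $|v| + \#\{u\in N(v): |u|>|v|\} - \#\{u\in N(v): |u|<|v|\}$. A period configuration is a configuration $D$ such that repeated firing starting from $D$ returns to $D$ after some positive number of steps (equivalently, $D$ lies in the eventually periodic part of the configuration sequence of some initial configuration). On the complete graph $K_n$ with unlabelled vertices, a configuration is a multiset of $n$ integers. *)

(* Defs.v *)
From mathcomp Require Import all_boot all_order all_algebra.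
Set Implicit Arguments. Unset Strict Implicit. Unset Printing Implicit Defensive.
Import Order.TTheory GRing.Theory Num.Theory.
Local Open Scope ring_scope.

(* A configuration on the unlabelled complete graph K_n is a multiset of n
   integers, represented by a sequence (up to permutation, i.e. perm_eq). *)

(* One parallel-diffusion firing step on K_n: every vertex gains one chip for
   each strictly larger neighbour and loses one for each strictly smaller one.
   (On K_n every other vertex is a neighbour; the vertex itself is neither
   strictly larger nor strictly smaller, so counting over all of C is exact.) *)
Definition fire (C : seq int) : seq int :=
  [seq x + (count (fun y => x < y) C)%:Z - (count (fun y => y < x) C)%:Z | x <- C].

Definition period_config (D : seq int) : Prop :=
  exists k : nat, (0 < k)%N /\ perm_eq (iter k fire D) D.

Definition distinct_sizes (C : seq int) : seq int := sort <=%R (undup C).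

(* Main.v *)
Require Import Defs.
From mathcomp Require Import all_boot all_order all_algebra.
From mathcomp Require Import ring lra zify.
Import Order.TTheory GRing.Theory Num.Theory.
Set Implicit Arguments. Unset Strict Implicit.
Local Open Scope ring_scope.

Definition ff (s : seq int) (x : int) : int :=
  x + (count (fun y => x < y) s)%:Z - (count (fun y => y < x) s)%:Z.
Lemma fireE s : fire s = map (ff s) s. Proof. by []. Qed.
Definition b2z (b : bool) : int := if b then 1 else 0.
Definition sg (x y : int) : int := b2z (x < y) - b2z (y < x).
Lemma countZ (P : pred int) s : (count P s)%:Z = \sum_(y <- s) b2z (P y).
Proof.
elim: s => [|a s IH] /=; first by rewrite big_nil.
by rewrite big_cons PoszD IH; case: (P a).
Qed.
Lemma fE s x : ff s x = x + \sum_(y <- s) sg x y.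
Proof. by rewrite /ff /sg sumrB -!countZ addrA. Qed.
Definition GG s := \sum_(x <- s) x * ff s x.
Lemma f_perm s t : perm_eq s t -> ff s =1 ff t.
Proof. by move/permP => H x; rewrite /ff !H. Qed.
Lemma G_perm s t : perm_eq s t -> GG s = GG t.
Proof.
move=> H; rewrite /GG (perm_big t H); apply: eq_bigr => x _.
by rewrite (f_perm H).
Qed.
Lemma sg_anti x y : sg x y = - sg y x.
Proof. by rewrite /sg opprB. Qed.

Lemma G_fire s : 2 * (GG s - GG (fire s)) =
  \sum_(x <- s) \sum_(y <- s) (ff s y - ff s x) * (sg x y + sg (ff s x) (ff s y)).
Proof.
set F := ff s.
set A := \sum_(x <- s) \sum_(y <- s) F x * (sg x y + sg (F x) (F y)).
have HG : GG s - GG (fire s) = - A.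
  rewrite /GG fireE (big_map (ff s) xpredT (fun x => x * ff (map (ff s) s) x)) -sumrB /A -sumrN; apply: eq_bigr => x _.
  have hx : \sum_(y <- s) sg x y = F x - x by rewrite /F fE; ring.
  have h2 : ff (map F s) (F x) = F x + \sum_(y <- s) sg (F x) (F y) by rewrite fE big_map.
  rewrite h2 -[in RHS]mulr_sumr [in RHS]big_split /= hx.
  move: (\sum_(y <- s) sg (F x) (F y)) => B.
  rewrite /F; ring.
have Hs : \sum_(x <- s) \sum_(y <- s) F y * (sg x y + sg (F x) (F y)) = - A.
  rewrite exchange_big /A -sumrN; apply: eq_bigr => y _.
  rewrite -sumrN; apply: eq_bigr => x _.
  rewrite [sg x y]sg_anti [sg (F x) (F y)]sg_anti; ring.
under eq_bigr do under eq_bigr do rewrite mulrBl.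
under eq_bigr do rewrite sumrB.
rewrite sumrB Hs HG -/A; ring.
Qed.

Lemma T_ge0 p q r t : 0 <= (t - r) * (sg p q + sg r t).
Proof.
rewrite /sg /b2z.
case: (ltrgtP p q) => _; case: (ltrgtP r t) => h //=; try lia.
Qed.

Lemma G_mono s : GG (fire s) <= GG s.
Proof.
have : 0 <= 2 * (GG s - GG (fire s)).
  rewrite G_fire; apply: sumr_ge0 => x _; apply: sumr_ge0 => y _; exact: T_ge0.
lia.
Qed.

Lemma sum_zero_in (s : seq int) (T : int -> int) x :
  (forall y, 0 <= T y) -> \sum_(y <- s) T y = 0 -> x \in s -> T x = 0.
Proof.
move=> H0 Hs xs; move: Hs; rewrite (big_rem x xs) /=.
move/eqP; rewrite paddr_eq0 ?H0 //; last by apply: sumr_ge0.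
by case/andP => /eqP.
Qed.

Lemma chain (h : nat -> int) k : (forall t, h t.+1 <= h t) -> (0 < k)%N ->
  h k = h 0%N -> h 1%N = h 0%N.
Proof.
move=> Hm k0 hk.
have H1 : forall t, (1 <= t)%N -> h t <= h 1%N.
  elim=> [//|t IH] ht; case: t IH ht => [//|t] IH _.
  exact: le_trans (Hm _) (IH isT).
apply/eqP; rewrite eq_le Hm /= -hk; exact: H1.
Qed.

Lemma nd_le (F : int -> int) s : (size (undup (map F s)) <= size (undup s))%N.
Proof.
have e : map F s =i map F (undup s).
  move=> z; apply/mapP/mapP => [[w ws ->]|[w ws ->]]; exists w => //; by rewrite ?mem_undup in ws *.
rewrite (perm_size (perm_undup e)); rewrite -(size_map F (undup s)); exact: size_undup.
Qed.

Lemma nd_merge (F : int -> int) s x y : x \in s -> y \in s -> x != y -> F x = F y ->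
  (size (undup (map F s)) < size (undup s))%N.
Proof.
move=> xs ys xy Fxy.
have e : map F s =i map F (undup s).
  move=> z; apply/mapP/mapP => [[w ws ->]|[w ws ->]]; exists w => //; by rewrite ?mem_undup in ws *.
rewrite (perm_size (perm_undup e)) -(size_map F (undup s)) ltn_size_undup.
apply/negP => U.
have xu : x \in undup s by rewrite mem_undup.
have P : perm_eq (map F (undup s)) (F x :: map F (rem x (undup s))).
  by rewrite -map_cons; apply: perm_map; exact: perm_to_rem.
move: U; rewrite (perm_uniq P) /= => /andP [/negP N _]; apply: N.
rewrite Fxy; apply: map_f; rewrite (mem_rem_uniq _ (undup_uniq s)) inE mem_undup ys andbT.
by rewrite eq_sym.
Qed.

Theorem mainTheorem4 (n : nat) (C : seq int) :
  size C = n ->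
  period_config C ->
  forall j : nat, (j.+1 < size (distinct_sizes C))%N ->
    nth 0 (distinct_sizes C) j.+1 - nth 0 (distinct_sizes C) j
      <= (count_mem (nth 0 (distinct_sizes C) j) C)%:Z
         + (count_mem (nth 0 (distinct_sizes C) j.+1) C)%:Z - 1.
Proof.
move=> _ [k [k0 Hp]] j Hj.
set D := distinct_sizes C.
set v1 := nth 0 D j; set v2 := nth 0 D j.+1.
have hsort : sorted <%R D by rewrite /D /distinct_sizes sort_lt_sorted undup_uniq.
have hlt : v1 < v2.
  by rewrite /v1 /v2 (lt_sorted_ltn_nth 0 hsort) // inE // ltnW.
have memD : forall y, (y \in D) = (y \in C) by move=> y; rewrite mem_sort mem_undup.
have v1C : v1 \in C by rewrite -memD mem_nth // ltnW.
have v2C : v2 \in C by rewrite -memD mem_nth.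
have btw : forall y, y \in C -> v1 < y -> y < v2 -> False.
  move=> y yC h1 h2.
  have yD : y \in D by rewrite memD.
  have iD : (index y D < size D)%N by rewrite index_mem.
  have ey : nth 0 D (index y D) = y by rewrite nth_index.
  move: h1 h2; rewrite -{1 2}ey /v1 /v2.
  rewrite !(lt_sorted_ltn_nth 0 hsort) ?inE //; try exact: ltnW.
  lia.
have c1 : count (fun y => v1 < y) C = (count_mem v2 C + count (fun y => (v2 < y)%R) C)%N.
  have -> : count (fun y => v1 < y) C = count (predU (pred1 v2) (fun y => v2 < y)) C.
    apply: eq_in_count => y yC /=.
    case: (ltgtP y v2) => [h|h|->]; last by rewrite ?eqxx hlt ?orbT.
    - rewrite ?(lt_eqF h) /=; apply/negbTE/negP => h1; exact: btw y yC h1 h.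
    - by rewrite (lt_trans hlt h) orbT.
  rewrite -count_predUI.
  have -> : count (predI (pred1 v2) (fun y => v2 < y)) C = 0%N.
    rewrite (eq_count (a2 := pred0)) ?count_pred0 // => y /=.
    by case: eqP => // ->; rewrite ltxx.
  by rewrite addn0.
have c2 : count (fun y => y < v2) C = (count (fun y => (y < v1)%R) C + count_mem v1 C)%N.
  have -> : count (fun y => y < v2) C = count (predU (fun y => y < v1) (pred1 v1)) C.
    apply: eq_in_count => y yC /=.
    case: (ltgtP y v1) => [h|h|->]; last by rewrite ?eqxx hlt ?orbT.
    - by rewrite (lt_trans h hlt).
    - rewrite ?orbF ?(gt_eqF h); apply/negbTE/negP => h1; exact: btw y yC h h1.
  rewrite -count_predUI.
  have -> : count (predI (fun y => y < v1) (pred1 v1)) C = 0%N.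
    rewrite (eq_count (a2 := pred0)) ?count_pred0 // => y /=.
    by case: eqP => [->|_]; rewrite ?ltxx ?andbF.
  by rewrite addn0.
set F := ff C.
have hdiff : F v2 - F v1 = v2 - v1 - (count_mem v1 C)%:Z - (count_mem v2 C)%:Z.
  rewrite /F /ff c1 c2 !PoszD; ring.
have hG : GG (fire C) = GG C.
  have := @chain (fun t => GG (iter t fire C)) k.
  apply => //; first by move=> t; rewrite iterS; exact: G_mono.
  exact: G_perm.
have hT : (F v2 - F v1) * (sg v1 v2 + sg (F v1) (F v2)) = 0.
  have hs := G_fire C; rewrite hG subrr mulr0 in hs.
  have H := @sum_zero_in C (fun x => \sum_(y <- C) (F y - F x) * (sg x y + sg (F x) (F y))) v1.
  have H1 := H (fun x => sumr_ge0 _ (fun y _ => T_ge0 x y (F x) (F y))) (esym hs) v1C.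
  apply: (@sum_zero_in C (fun y => (F y - F v1) * (sg v1 y + sg (F v1) (F y))) v2 _ H1 v2C).
  by move=> y; apply: T_ge0.
have hN : F v1 != F v2.
  apply/negP => /eqP E.
  have Hm : forall t, (fun t => (size (undup (iter t fire C)))%:Z) t.+1 <= (fun t => (size (undup (iter t fire C)))%:Z) t.
    by move=> t; rewrite /= ?iterS fireE lez_nat; exact: nd_le.
  have H : (fun t => (size (undup (iter t fire C)))%:Z) k = (size (undup C))%:Z.
    by rewrite /= (perm_size (perm_undup (perm_mem Hp))).
  have := @chain (fun t => (size (undup (iter t fire C)))%:Z) k Hm k0 H.
  rewrite /= => /eqP; rewrite eqz_nat => /eqP heq.
  have := @nd_merge F C v1 v2 v1C v2C (negbT (lt_eqF hlt)) E.
  by rewrite -fireE heq ltnn.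
move: hT hN; rewrite /sg /b2z hlt (lt_gtF hlt) /=.
case: (ltrgtP (F v1) (F v2)) => h; rewrite /=; try lia.
move=> _ _; move: h; rewrite -subr_lt0 hdiff; clearbody v1 v2; move: (count_mem v1 C) (count_mem v2 C) => a b; lia.
Qed.
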